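(* Let $k$ be an integer with $9\le k\le 17$. For every $k$-uniform hypergraph $H=(V,E)$ with $m=|E|$, \[100\,\tau(H) \le 9.5976\,n_1 + 14.8298\,n_2 + 16.1586\,n_3 + 16.6667\,n_{\ge 4} + 16.6667\,m.\]
   Context: A hypergraph $H=(V,E)$ consists of a finite vertex set $V$ and a finite collection $E$ of subsets of $V$ (edges); it is $k$-uniform if every edge has exactly $k$ vertices. The degree of a vertex $v$ is the number of edges containing $v$. For $i\ge 1$, $n_i$ denotes the number of vertices of degree exactly $i$, and $n_{\ge i}=\sum_{j\ge i} n_j$. A transversal is a vertex set meeting every edge; $\tau(H)$ is the minimum size of a transversal. *)

(* Defs.v *)
From mathcomp Require Import all_boot.
Set Implicit Arguments. Unset Strict Implicit. Unset Printing Implicit Defensive.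

(* A hypergraph on the finite vertex type V with edge collection E
   (a finite multiset of subsets of V, given as a sequence). *)

Definition kuniform (V : finType) (k : nat) (E : seq {set V}) : bool :=
  all (fun e : {set V} => #|e| == k) E.

Definition degree (V : finType) (E : seq {set V}) (v : V) : nat :=
  count (fun e : {set V} => v \in e) E.

Definition n_deg (V : finType) (E : seq {set V}) (i : nat) : nat :=
  #|[set v : V | degree E v == i]|.

Definition n_deg_ge (V : finType) (E : seq {set V}) (i : nat) : nat :=
  #|[set v : V | i <= degree E v]|.

Definition transversal (V : finType) (E : seq {set V}) (S : {set V}) : bool :=
  all (fun e : {set V} => [exists x, (x \in e) && (x \in S)]) E.

(* tau(H): minimum size of a transversal (the initial value #|V| is an
   upper bound whenever a transversal exists, e.g. when no edge is empty). *)
Definition tau (V : finType) (E : seq {set V}) : nat :=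
  \big[minn/#|V|]_(S : {set V} | transversal E S) #|S|.

(* Main.v *)
Require Import Defs.
From mathcomp Require Import all_boot all_order all_algebra.
Import Order.TTheory GRing.Theory Num.Theory.
From mathcomp Require Import zify ring lra.
Set Implicit Arguments. Unset Strict Implicit.
Definition G (d : nat) : nat :=
  match d with 0 => 0 | 1 => 28 | 2 => 43 | 3 => 48 | _ => 50 end.
Definition mu (d : nat) : nat :=
  match d with 0 => 0 | 1 => 28 | 2 => 15 | 3 => 5 | 4 => 2 | _ => 0 end.

Lemma G_mono a b : a <= b -> G a <= G b.
Proof.
case: a => [|[|[|[|a]]]]; case: b => [|[|[|[|b]]]] //=.
Qed.

Lemma G_step a t D : a + t <= D -> G a + t * mu D <= G (a + t).
Proof.
move=> H.
case: (leqP 5 D) => HD.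
  have -> : mu D = 0 by case: D H HD => [|[|[|[|[|D]]]]].
  rewrite muln0 addn0; apply: G_mono; exact: leq_addr.
case: a H => [|[|[|[|[|a]]]]]; case: t => [|[|[|[|[|t]]]]];
  case: D HD => [|[|[|[|[|D]]]]] //= _; rewrite ?addnS ?addSn ?add0n ?addn0 //=; lia.
Qed.

Lemma final_ineq d : 0 < d -> 300 <= 50 * d + G d + 8 * d * mu d.
Proof. case: d => [|[|[|[|[|d]]]]] //= _; lia. Qed.

Section S.
Context (V : finType).

Definition Phi (E : seq {set V}) := \sum_(u : V) G (degree E u) + 50 * size E.
Definition drop_v (v : V) (E : seq {set V}) := filter (fun e : {set V} => v \notin e) E.
Definition tcount (v u : V) (E : seq {set V}) := count (fun e : {set V} => (v \in e) && (u \in e)) E.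

Lemma split_deg E v u : degree E u = degree (drop_v v E) u + tcount v u E.
Proof.
rewrite /degree /tcount /drop_v; elim: E => //= e E ->.
case: (boolP (v \in e)) => Hv; case: (boolP (u \in e)) => Hu /=; rewrite ?Hv ?Hu /=; lia.
Qed.

Lemma deg_drop E v : degree (drop_v v E) v = 0.
Proof.
rewrite /degree /drop_v; elim: E => //= e E IH.
case: (boolP (v \in e)) => H /=; rewrite ?H /=; first exact: IH. by move/negPf: H => ->.
Qed.

Lemma split_size E v : size E = size (drop_v v E) + degree E v.
Proof.
rewrite /degree /drop_v; elim: E => //= e E ->.
by case: (v \in e) => /=; lia.
Qed.

Lemma tcount_vv E v : tcount v v E = degree E v.
Proof. by rewrite /tcount /degree; apply: eq_count => e; rewrite andbb. Qed.

Lemma tcount_le E v u : tcount v u E <= degree E v.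
Proof. rewrite /tcount /degree; apply: sub_count => e /andP[]//. Qed.

Lemma sum_t E v : all (fun e : {set V} => 9 <= #|e|) E ->
  9 * degree E v <= \sum_(u : V) tcount v u E.
Proof.
rewrite /tcount /degree; elim: E => [|e E IH] /=; first by rewrite big1.
move=> /andP[He HE].
rewrite big_split /=.
have -> : \sum_(u : V) ((v \in e) && (u \in e) : nat) = (v \in e) * #|e|.
  case: (v \in e) => /=; last by rewrite mul0n big1.
  by rewrite mul1n -sum1_card [RHS]big_mkcond /=; apply: eq_bigr => u _; case: (u \in e).
have := IH HE; case: (boolP (v \in e)) => Hv /=; rewrite ?Hv /=; lia.
Qed.

Lemma maxdeg E : E != [::] -> all (fun e : {set V} => 9 <= #|e|) E ->
  exists v, 0 < degree E v /\ forall u, degree E u <= degree E v.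
Proof.
case: E => [|e E] // _ /= /andP[He _].
have /card_gt0P[x Hx] : 0 < #|e| by apply: leq_trans He.
have [v _ Hv] := @arg_maxnP V x xpredT (degree (e :: E)) isT.
exists v; split => [|u]; last exact: Hv.
apply: leq_trans (Hv x isT); by rewrite /degree /= Hx.
Qed.

Lemma key E : all (fun e : {set V} => 9 <= #|e|) E ->
  exists S : {set V}, Defs.transversal E S && (300 * #|S| <= Phi E).
Proof.
move: {2}(size E) (leqnn (size E)) => n; elim: n E => [|n IH] E.
  rewrite leqn0 size_eq0 => /eqP -> _; exists set0; by rewrite cards0.
move=> Hn HE.
case: (E =P [::]) => [->|/eqP HE0]; first by exists set0; rewrite cards0.
have [v [Hv0 Hmax]] := maxdeg HE0 HE.
set d := degree E v in Hv0 Hmax.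
have HE' : all (fun e : {set V} => 9 <= #|e|) (drop_v v E).
  by rewrite /drop_v all_filter; apply/allP => e /(allP HE) H /=; rewrite H implybT.
have Hn' : size (drop_v v E) <= n.
  have := split_size E v; rewrite -/d; lia.
have [S' /andP[HS' HP']] := IH _ Hn' HE'.
exists (v |: S'); apply/andP; split.
  apply/allP => e He; case Hve: (v \in e).
    by apply/existsP; exists v; rewrite Hve setU11.
  move: HS'; rewrite /Defs.transversal /drop_v all_filter => /allP/(_ e He).
  rewrite /= Hve /= => /existsP[x /andP[H1 H2]].
  by apply/existsP; exists x; rewrite H1 setU1r.
have Hcard : #|v |: S'| <= #|S'|.+1 by rewrite cardsU1; case: (v \notin S').
have Hdrop : 300 + Phi (drop_v v E) <= Phi E.
  rewrite /Phi (split_size E v) -/d.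
  have Hsum : \sum_(u : V) G (degree (drop_v v E) u) + G d
        + mu d * \sum_(u | u != v) tcount v u E <= \sum_(u : V) G (degree E u).
    rewrite (bigD1 v) //= [X in _ <= X](bigD1 v) //=.
    have -> : degree (drop_v v E) v = 0.
      by apply: deg_drop.
    rewrite big_distrr /= -/d.
    have : \sum_(i | i != v) G (degree (drop_v v E) i) + \sum_(i | i != v) mu d * tcount v i E
        <= \sum_(i | i != v) G (degree E i).
      rewrite -big_split /=; apply: leq_sum => u _.
      rewrite (split_deg E v u) mulnC; apply: G_step.
      by rewrite -split_deg.
    simpl; lia.
  have Ht : 8 * d <= \sum_(u | u != v) tcount v u E.
    have := sum_t v HE; rewrite (bigD1 v) //= tcount_vv -/d; lia.
  have Hf := final_ineq Hv0.
  have : mu d * (8 * d) <= mu d * \sum_(u | u != v) tcount v u E by rewrite leq_mul2l Ht orbT.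
  move: Hsum; lia.
lia.
Qed.

End S.


Lemma tau_le (V : finType) (E : seq {set V}) S : Defs.transversal E S -> tau E <= #|S|.
Proof.
move=> H; rewrite /tau.
have : S \in index_enum {set V} by rewrite mem_index_enum.
elim: (index_enum {set V}) => // T r IH; rewrite inE big_cons.
case/orP => [/eqP <-|/IH Hr]; first by rewrite H geq_minl.
by case: ifP => _ //; rewrite geq_min Hr orbT.
Qed.

Lemma card_sum (T : finType) (P : pred T) c :
  c * #|[set x | P x]| = \sum_(x : T) (if P x then c else 0).
Proof.
rewrite -sum1dep_card big_distrr big_mkcond /=; apply: eq_bigr => x _.
by case: (P x); rewrite ?muln1.
Qed.

Lemma sumG (V : finType) (E : seq {set V}) :
  \sum_(u : V) G (degree E u) =
  28 * n_deg E 1 + 43 * n_deg E 2 + 48 * n_deg E 3 + 50 * n_deg_ge E 4.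
Proof.
rewrite /n_deg /n_deg_ge !card_sum -!big_split /=.
apply: eq_bigr => u _.
by case: (degree E u) => [|[|[|[|[|d]]]]].
Qed.

Unset Implicit Arguments. Set Strict Implicit.
Local Open Scope ring_scope.

Theorem mainTheorem5 (k : nat) (V : finType) (E : seq {set V}) :
  (9 <= k <= 17)%N -> kuniform k E ->
  100 * (tau E)%:R <=
    (95976%:R / 10000) * (n_deg E 1)%:R
    + (148298%:R / 10000) * (n_deg E 2)%:R
    + (161586%:R / 10000) * (n_deg E 3)%:R
    + (166667%:R / 10000) * (n_deg_ge E 4)%:R
    + (166667%:R / 10000) * (size E)%:R :> rat.
Proof.
move=> /andP[Hk _] Hu.
have Hall : all (fun e : {set V} => 9 <= #|e|)%N E.
  apply/allP => e He; move/allP: Hu => /(_ e He) /eqP ->; exact: Hk.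
have [S /andP[HS HP]] := key Hall.
have Ht := tau_le HS.
move: HP; rewrite /Phi sumG => HP.
have Hn : (300 * tau E <= 28 * n_deg E 1 + 43 * n_deg E 2 + 48 * n_deg E 3
           + 50 * n_deg_ge E 4 + 50 * size E)%N.
  apply: leq_trans HP; rewrite leq_mul2l; exact: Ht.
move: (tau E) (n_deg E 1) (n_deg E 2) (n_deg E 3) (n_deg_ge E 4) (size E) Hn
  => t0 a0 b0 c0 d0 m0 Hn.
have H : (300%:R * t0%:R <= 28%:R * a0%:R + 43%:R * b0%:R + 48%:R * c0%:R
           + 50%:R * d0%:R + 50%:R * m0%:R :> rat).
  by rewrite -!natrM -!natrD ler_nat.
have h1 : 0 <= a0%:R :> rat by exact: ler0n.
have h2 : 0 <= b0%:R :> rat by exact: ler0n.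
have h3 : 0 <= c0%:R :> rat by exact: ler0n.
have h4 : 0 <= d0%:R :> rat by exact: ler0n.
have h5 : 0 <= m0%:R :> rat by exact: ler0n.
lra.
Qed.
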